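(* Let $G$ be a finite $p$-group, $N$ a normal subgroup, $k=\mathbb F_p$ and $n\ge 0$. Then $$\Lambda^n_N:\frac{\mathcal I(N)kG}{\mathcal I(N)\mathcal I(G)}\to\frac{\mathcal I(N)^{p^n}kG}{\mathcal J^{p^n}(N,G)},\qquad x+\mathcal I(N)\mathcal I(G)\mapsto x^{p^n}+\mathcal J^{p^n}(N,G)$$ is a well defined map.
   Context: $\mathcal I(X)$ is the augmentation ideal of $kX$, viewed inside $kG$. The ideals $\mathcal J^n(N,G)$ of $kG$ are defined by $\mathcal J^1(N,G)=\mathcal I(N)\mathcal I(G)$ and $\mathcal J^{n+1}(N,G)=\mathcal I(N)\mathcal J^n(N,G)+\mathcal J^n(N,G)\mathcal I(N)$; equivalently $\mathcal J^n(N,G)=\mathcal I(N)^n\mathcal I(G)+\sum_{i=1}^{n-1}\mathcal I(N)^{n-i}\mathcal I(G)\mathcal I(N)^i$. *)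

(* Defs.v *)
(* Group algebra kG modelled as finitely supported functions
   gT -> F (for G : {group gT}, kG = functions supported on G), with
   convolution product; ideals are modelled as subsets (predicates) of
   {ffun gT -> F}, and products/sums of ideals as F-linear spans. *)
From HB Require Import structures.
From mathcomp Require Import all_boot all_order all_algebra all_fingroup all_solvable.
Set Implicit Arguments. Unset Strict Implicit. Unset Printing Implicit Defensive.
Import GRing.Theory.
Local Open Scope ring_scope.

Section GroupAlgebra.
Variables (F : fieldType) (gT : finGroupType).

Definition galg := {ffun gT -> F}.

Definition gmul (a b : galg) : galg :=
  [ffun g => \sum_(h : gT) a h * b (h^-1 * g)%g].

Definition gone : galg := [ffun g => if g == 1%g then 1 else 0].

Definition gscale (c : F) (a : galg) : galg := [ffun g => c * a g].

Fixpoint gpow (x : galg) (n : nat) : galg :=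
  match n with 0 => gone | n'.+1 => gmul x (gpow x n') end.

Inductive span (S : galg -> Prop) : galg -> Prop :=
| span0 : span S 0
| span_gen x : S x -> span S x
| span_lin c x y : span S x -> span S y -> span S (gscale c x + y).

(* kX viewed inside k[gT]: functions supported on X *)
Definition kgrp (X : {set gT}) (x : galg) : Prop :=
  forall g, g \notin X -> x g = 0.

Definition aug (X : {set gT}) (x : galg) : Prop :=
  kgrp X x /\ \sum_(g : gT) x g = 0.

Definition prodI (A B : galg -> Prop) : galg -> Prop :=
  span (fun z => exists a b, A a /\ B b /\ z = gmul a b).

Definition sumI (A B : galg -> Prop) : galg -> Prop :=
  span (fun z => A z \/ B z).

(* A^n for n >= 1 (A^0 := A is never used) *)
Fixpoint powI (A : galg -> Prop) (n : nat) : galg -> Prop :=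
  match n with
  | 0 | 1 => A
  | n'.+1 => prodI A (powI A n')
  end.

(* Jaux m = J^{m+1}(N,G) *)
Fixpoint Jaux (N G : {set gT}) (m : nat) : galg -> Prop :=
  match m with
  | 0 => prodI (aug N) (aug G)
  | m'.+1 => sumI (prodI (aug N) (Jaux N G m')) (prodI (Jaux N G m') (aug N))
  end.

Definition J (N G : {set gT}) (n : nat) : galg -> Prop := Jaux N G n.-1.

End GroupAlgebra.

(* Main.v *)
Require Import Defs.
From mathcomp Require Import all_boot all_order all_algebra all_fingroup all_solvable.
Set Implicit Arguments. Unset Strict Implicit. Unset Printing Implicit Defensive.
Import GRing.Theory.
Local Open Scope ring_scope.

Section Basic.
Variables (F : fieldType) (gT : finGroupType).
Local Notation galg := (galg F gT).
Local Notation gmul := (@gmul F gT).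
Local Notation gscale := (@gscale F gT).
Local Notation gpow := (@gpow F gT).
Local Notation span := (@Defs.span F gT).
Local Notation span0 := (@Defs.span0 F gT).
Local Notation span_gen := (@Defs.span_gen F gT).
Local Notation span_lin := (@Defs.span_lin F gT).

Lemma sum_collapse (f : gT -> F) a : (forall k, k != a -> f k = 0) ->
  \sum_k f k = f a.
Proof. by move=> H; rewrite (bigD1 a) //= big1 ?addr0 // => k /H. Qed.

Lemma gmulDl x y z : gmul (x + y) z = gmul x z + gmul y z.
Proof. by apply/ffunP=> g; rewrite !ffunE -big_split /=; apply: eq_bigr => h _; rewrite ffunE mulrDl. Qed.
Lemma gmulDr x y z : gmul z (x + y) = gmul z x + gmul z y.
Proof. by apply/ffunP=> g; rewrite !ffunE -big_split /=; apply: eq_bigr => h _; rewrite ffunE mulrDr. Qed.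
Lemma gmulNl x z : gmul (- x) z = - gmul x z.
Proof. by apply/ffunP=> g; rewrite !ffunE -sumrN; apply: eq_bigr => h _; rewrite ffunE mulNr. Qed.
Lemma gmulNr x z : gmul z (- x) = - gmul z x.
Proof. by apply/ffunP=> g; rewrite !ffunE -sumrN; apply: eq_bigr => h _; rewrite ffunE mulrN. Qed.
Lemma gmulZl c x z : gmul (gscale c x) z = gscale c (gmul x z).
Proof. by apply/ffunP=> g; rewrite !ffunE mulr_sumr; apply: eq_bigr => h _; rewrite ffunE mulrA. Qed.
Lemma gmulZr c x z : gmul z (gscale c x) = gscale c (gmul z x).
Proof. by apply/ffunP=> g; rewrite !ffunE mulr_sumr; apply: eq_bigr => h _; rewrite ffunE mulrCA. Qed.
Lemma gmul0l z : gmul 0 z = 0.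
Proof. by apply/ffunP=> g; rewrite !ffunE big1 // => h _; rewrite ffunE mul0r. Qed.
Lemma gmul0r z : gmul z 0 = 0.
Proof. by apply/ffunP=> g; rewrite !ffunE big1 // => h _; rewrite ffunE mulr0. Qed.
Lemma gscale0 x : gscale 0 x = 0.
Proof. by apply/ffunP=> g; rewrite !ffunE mul0r. Qed.
Lemma gscale1 x : gscale 1 x = x.
Proof. by apply/ffunP=> g; rewrite !ffunE mul1r. Qed.
Lemma gscaleN1 x : gscale (-1) x = - x.
Proof. by apply/ffunP=> g; rewrite !ffunE mulN1r. Qed.

Lemma gmulA x y z : gmul (gmul x y) z = gmul x (gmul y z).
Proof.
apply/ffunP=> g; rewrite !ffunE.
under eq_bigr do rewrite ffunE mulr_suml.
rewrite exchange_big /=; apply: eq_bigr => j _.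
rewrite ffunE mulr_sumr (reindex_inj (mulgI j)) /=.
apply: eq_bigr => k _; rewrite mulKg mulrA invMg mulgA //.
Qed.

Lemma gmul1r x : gmul x (gone F gT) = x.
Proof.
apply/ffunP=> g; rewrite ffunE (sum_collapse (a := g)).
  by rewrite ffunE mulVg eqxx mulr1.
move=> k nk; rewrite ffunE; case: eqP; rewrite ?mulr0 // => E.
by case/eqP: nk; rewrite -[k]mulg1 -E mulKVg.
Qed.


Definition lin_closed (T : galg -> Prop) :=
  T 0 /\ forall c x y, T x -> T y -> T (gscale c x + y).

Lemma span_lc S : lin_closed (span S).
Proof. by split; [exact: span0 | move=> *; exact: span_lin]. Qed.

Lemma lc_add T x y : lin_closed T -> T x -> T y -> T (x + y).
Proof. by case=> _ H Tx Ty; rewrite -[x]gscale1; apply: H. Qed.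
Lemma lc_sub T x y : lin_closed T -> T x -> T y -> T (x - y).
Proof. by case=> _ H Tx Ty; rewrite addrC -gscaleN1; apply: H. Qed.
Lemma lc_scale T c x : lin_closed T -> T x -> T (gscale c x).
Proof. by case=> H0 H Tx; rewrite -[gscale c x]addr0; apply: H. Qed.
Lemma lc_sum T (I : finType) (f : I -> galg) : lin_closed T ->
  (forall i, T (f i)) -> T (\sum_i f i).
Proof. move=> lT H; apply: big_ind => //; [exact: lT.1 | move=> *; exact: lc_add]. Qed.

Lemma span_transfer S T (f : galg -> galg) x :
  f 0 = 0 -> (forall c x y, f (gscale c x + y) = gscale c (f x) + f y) ->
  lin_closed T -> (forall s, S s -> T (f s)) -> span S x -> T (f x).
Proof.
move=> f0 fl lT HS; elim=> [|s /HS //|c u v _ Hu _ Hv].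
  by rewrite f0; exact: lT.1.
by rewrite fl; apply: lT.2.
Qed.

Lemma span_mulr S T z x : lin_closed T -> (forall s, S s -> T (gmul s z)) ->
  span S x -> T (gmul x z).
Proof.
move=> lT H; apply: (span_transfer (f := fun x => gmul x z)) => //.
  exact: gmul0l.
by move=> c u v; rewrite gmulDl gmulZl.
Qed.

Lemma span_mull S T z x : lin_closed T -> (forall s, S s -> T (gmul z s)) ->
  span S x -> T (gmul z x).
Proof.
move=> lT H; apply: (span_transfer (f := fun x => gmul z x)) => //.
  exact: gmul0r.
by move=> c u v; rewrite gmulDr gmulZr.
Qed.

Lemma span_sub S T x : lin_closed T -> (forall s, S s -> T s) -> span S x -> T x.
Proof. by move=> lT H Sx; apply: (span_transfer (f := id)) Sx. Qed.

Lemma prodI_gen (A B : galg -> Prop) a b : A a -> B b -> prodI A B (gmul a b).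
Proof. by move=> Aa Bb; apply: span_gen; exists a, b. Qed.

Section Group.
Variables (G N : {group gT}).
Hypothesis nNG : (N <| G)%g.

Definition delta (g : gT) : galg := [ffun h => if h == g then 1 else 0].
Definition conjf (a : galg) (g : gT) : galg := [ffun h => a (h ^ g)%g].

Lemma kgrp_lc (H : {set gT}) : lin_closed (kgrp H).
Proof.
split; first by move=> g _; rewrite ffunE.
by move=> c x y Hx Hy g gH; rewrite !ffunE Hx // Hy // mulr0 addr0.
Qed.

Lemma aug_lc (H : {set gT}) : lin_closed (aug H).
Proof.
split; first by split; [exact: (kgrp_lc H).1 | rewrite big1 // => g _; rewrite ffunE].
move=> c x y [Hx Sx] [Hy Sy]; split; first exact: (kgrp_lc H).2.
by rewrite (eq_bigr (fun g => c * x g + y g)) ?big_split /= -?mulr_sumr ?Sx ?Sy ?mulr0 ?addr0 // => g _; rewrite !ffunE.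
Qed.

Lemma kgrp_mul (H : {group gT}) x y : kgrp H x -> kgrp H y -> kgrp H (gmul x y).
Proof.
move=> Hx Hy g gH; rewrite ffunE big1 // => k _.
case kH: (k \in H); last by rewrite Hx ?kH ?mul0r.
rewrite Hy ?mulr0 //; apply: contra gH => kg.
by rewrite -(mulKVg k g); apply: groupM.
Qed.

Lemma eps_mul x y : \sum_g gmul x y g = (\sum_g x g) * (\sum_g y g).
Proof.
under eq_bigr do rewrite ffunE.
rewrite exchange_big mulr_suml /=; apply: eq_bigr => k _.
rewrite mulr_sumr (reindex_inj (mulgI k)) /=.
by apply: eq_bigr => h _; rewrite mulKg.
Qed.

Lemma aug_mull (H : {group gT}) b c : kgrp H b -> aug H c -> aug H (gmul b c).
Proof. by move=> Kb [Kc Sc]; split; [exact: kgrp_mul | rewrite eps_mul Sc mulr0]. Qed.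
Lemma aug_mulr (H : {group gT}) b c : kgrp H b -> aug H c -> aug H (gmul c b).
Proof. by move=> Kb [Kc Sc]; split; [exact: kgrp_mul | rewrite eps_mul Sc mul0r]. Qed.

Lemma delta_kgrp g : g \in G -> kgrp G (delta g).
Proof. by move=> gG h hG; rewrite ffunE; case: eqP => // E; rewrite E gG in hG. Qed.

Lemma conjf_aug a g : g \in G -> aug N a -> aug N (conjf a g).
Proof.
move=> gG [Ka Sa]; have gN : g \in 'N(N)%g by apply: (subsetP (normal_norm nNG)).
split.
  by move=> h hN; rewrite ffunE Ka // memJ_norm.
rewrite -[RHS]Sa (reindex_inj (conjg_inj (g^-1)%g)) /=.
by apply: eq_bigr => h _; rewrite ffunE conjgKV.
Qed.

Lemma CL_decomp b a :
  gmul b a = \sum_g gscale (b g) (gmul (conjf a g) (delta g)).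
Proof.
apply/ffunP=> h; rewrite ffunE sum_ffunE; apply: eq_bigr => g _.
rewrite !ffunE (sum_collapse (a := (h * g^-1)%g)).
  rewrite !ffunE invMg invgK mulgKV eqxx mulr1 conjgE mulgKV.
  by [].
move=> k nk; rewrite !ffunE; case: eqP; rewrite ?mulr0 // => E.
by case/eqP: nk; rewrite -E invMg invgK mulKVg.
Qed.

Lemma CR_decomp a b :
  gmul a b = \sum_g gscale (b g) (gmul (delta g) (conjf a (g^-1)%g)).
Proof.
apply/ffunP=> h; rewrite ffunE sum_ffunE.
rewrite (reindex_inj (h := fun g => h * g^-1)%g); last first.
  by move=> u v /mulgI /invg_inj.
apply: eq_bigr => g _ /=.
rewrite !ffunE (sum_collapse (a := g)).
  rewrite !ffunE eqxx mul1r invMg invgK mulrC mulgKV.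
  by rewrite conjgE invgK !mulgA mulgV mul1g.
by move=> k nk; rewrite !ffunE (negbTE nk) mul0r.
Qed.

End Group.

Lemma lc_mull T a : lin_closed T -> lin_closed (fun w => T (gmul a w)).
Proof.
case=> T0 TL; split; first by rewrite gmul0r.
by move=> c x y Tx Ty; rewrite gmulDr gmulZr; apply: TL.
Qed.
Lemma lc_mulr T a : lin_closed T -> lin_closed (fun w => T (gmul w a)).
Proof.
case=> T0 TL; split; first by rewrite gmul0l.
by move=> c x y Tx Ty; rewrite gmulDl gmulZl; apply: TL.
Qed.

Section Ideals.
Variables (G N : {group gT}).
Hypothesis nNG : (N <| G)%g.
Local Notation A := (aug N).
Local Notation K := (kgrp G).
Local Notation IG := (aug G).
Local Notation P m := (prodI (powI A m) K).

Lemma powI_lc m : lin_closed (powI A m).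
Proof. by case: m => [|[|m]]; [exact: aug_lc | exact: aug_lc | exact: span_lc]. Qed.
Lemma Jaux_lc m : lin_closed (Jaux N G m).
Proof. by case: m => [|m]; exact: span_lc. Qed.

Lemma CL b a : K b -> A a -> P 1 (gmul b a).
Proof.
move=> Kb Aa; rewrite CL_decomp; apply: lc_sum; first exact: span_lc.
move=> g; case gG: (g \in G).
  apply: (lc_scale _ (span_lc _)).
  by apply: prodI_gen; [exact: (conjf_aug nNG) | exact: delta_kgrp].
by rewrite Kb ?gG // gscale0; exact: span0.
Qed.

Lemma CR a b : A a -> K b -> prodI K A (gmul a b).
Proof.
move=> Aa Kb; rewrite CR_decomp; apply: lc_sum; first exact: span_lc.
move=> g; case gG: (g \in G).
  apply: (lc_scale _ (span_lc _)).
  by apply: prodI_gen; [exact: delta_kgrp | apply: (conjf_aug nNG) => //; rewrite groupV].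
by rewrite Kb ?gG // gscale0; exact: span0.
Qed.

Lemma KP m b u : K b -> powI A m.+1 u -> P m.+1 (gmul b u).
Proof.
elim: m b u => [|m IH] b u Kb.
  exact: CL.
move=> Hu; apply: (span_mull _ _ Hu); first exact: span_lc.
move=> s [a [u2 [Aa [Hu2 ->]]]]; rewrite -gmulA.
apply: (span_mulr (span_lc _) _ (CL Kb Aa)).
move=> s' [a' [c' [Aa' [Kc' ->]]]]; rewrite gmulA.
apply: (span_mull (span_lc _) _ (IH _ _ Kc' Hu2)).
move=> t [u3 [c3 [Hu3 [Kc3 ->]]]]; rewrite -gmulA.
by apply: prodI_gen => //; exact: prodI_gen.
Qed.

Lemma P_mul m x y : P 1 x -> P m.+1 y -> P m.+2 (gmul x y).
Proof.
move=> Px Py; apply: (span_mulr (span_lc _) _ Px).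
move=> s [a [b [Aa [Kb ->]]]].
apply: (span_mull (span_lc _) _ Py).
move=> t [u [c [Hu [Kc ->]]]].
rewrite gmulA -(gmulA b u c).
apply: (span_mulr (T := fun w => P m.+2 (gmul a w)) (lc_mull _ (span_lc _)) _ (KP Kb Hu)).
move=> w [u' [c' [Hu' [Kc' ->]]]].
rewrite gmulA -gmulA; apply: prodI_gen; first exact: prodI_gen.
exact: kgrp_mul.
Qed.

Lemma gpow1 x : gpow x 1 = x.
Proof. exact: gmul1r. Qed.

Lemma pow_P m x : P 1 x -> P m.+1 (gpow x m.+1).
Proof.
move=> Px; elim: m => [|m IH]; first by rewrite gpow1.
exact: P_mul.
Qed.

Lemma JA_l m a w : A a -> Jaux N G m w -> Jaux N G m.+1 (gmul a w).
Proof. by move=> Aa Hw; apply: span_gen; left; exact: prodI_gen. Qed.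
Lemma JA_r m a w : A a -> Jaux N G m w -> Jaux N G m.+1 (gmul w a).
Proof. by move=> Aa Hw; apply: span_gen; right; exact: prodI_gen. Qed.

Lemma JL m b w : K b -> Jaux N G m w -> Jaux N G m (gmul b w).
Proof.
elim: m b w => [|m IH] b w Kb Hw.
  apply: (span_mull (span_lc _) _ Hw).
  move=> s [a [c [Aa [Ic ->]]]]; rewrite -gmulA.
  apply: (span_mulr (span_lc _) _ (CL Kb Aa)).
  move=> s' [a' [d' [Aa' [Kd' ->]]]]; rewrite gmulA.
  by apply: prodI_gen => //; exact: aug_mull.
apply: (span_mull (span_lc _) _ Hw) => s [] Hs.
  apply: (span_mull (span_lc _) _ Hs).
  move=> t [a [w' [Aa [Hw' ->]]]]; rewrite -gmulA.
  apply: (span_mulr (span_lc _) _ (CL Kb Aa)).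
  move=> s' [a' [d' [Aa' [Kd' ->]]]]; rewrite gmulA.
  by apply: JA_l => //; exact: IH.
apply: (span_mull (span_lc _) _ Hs).
move=> t [w' [a [Hw' [Aa ->]]]]; rewrite -gmulA.
by apply: JA_r => //; exact: IH.
Qed.

Lemma JR m b w : K b -> Jaux N G m w -> Jaux N G m (gmul w b).
Proof.
elim: m b w => [|m IH] b w Kb Hw.
  apply: (span_mulr (span_lc _) _ Hw).
  move=> s [a [c [Aa [Ic ->]]]]; rewrite gmulA.
  by apply: prodI_gen => //; exact: aug_mulr.
apply: (span_mulr (span_lc _) _ Hw) => s [] Hs.
  apply: (span_mulr (span_lc _) _ Hs).
  move=> t [a [w' [Aa [Hw' ->]]]]; rewrite gmulA.
  by apply: JA_l => //; exact: IH.
apply: (span_mulr (span_lc _) _ Hs).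
move=> t [w' [a [Hw' [Aa ->]]]]; rewrite gmulA.
apply: (span_mull (span_lc _) _ (CR Aa Kb)).
move=> s' [d' [a' [Kd' [Aa' ->]]]]; rewrite -gmulA.
by apply: JA_r => //; exact: IH.
Qed.

Lemma JP m k w u : Jaux N G k w -> powI A m.+1 u -> Jaux N G (k + m.+1) (gmul w u).
Proof.
elim: m k w u => [|m IH] k w u Hw Hu.
  by rewrite addn1; exact: JA_r.
apply: (span_mull (T := Jaux N G (k + m.+2)) (Jaux_lc _) _ Hu).
move=> s [a [u2 [Aa [Hu2 ->]]]]; rewrite -gmulA -addSnnS.
by apply: IH => //; exact: JA_r.
Qed.

Lemma J1P m z y : Jaux N G 0 z -> P m.+1 y -> Jaux N G m.+1 (gmul z y).
Proof.
move=> Hz Hy; apply: (span_mull (span_lc _) _ Hy).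
move=> s [u [c [Hu [Kc ->]]]]; rewrite -gmulA.
apply: (JR (m := m.+1)) => //; exact: (JP (k := 0)).
Qed.

Lemma P1J k x w : P 1 x -> Jaux N G k w -> Jaux N G k.+1 (gmul x w).
Proof.
move=> Hx Hw; apply: (span_mulr (span_lc _) _ Hx).
move=> s [a [b [Aa [Kb ->]]]]; rewrite gmulA.
by apply: JA_l => //; exact: JL.
Qed.

Lemma main2 m x y : P 1 x -> P 1 y -> Jaux N G 0 (x - y) ->
  Jaux N G m (gpow x m.+1 - gpow y m.+1).
Proof.
move=> Px Py Hxy; elim: m => [|m IH]; first by rewrite !gpow1.
have -> : gpow x m.+2 - gpow y m.+2 =
  gmul x (gpow x m.+1 - gpow y m.+1) + gmul (x - y) (gpow y m.+1).
  by rewrite /= gmulDr gmulNr gmulDl gmulNl addrA subrK.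
apply: lc_add; first exact: span_lc.
  exact: P1J.
by apply: J1P => //; exact: pow_P.
Qed.

End Ideals.
End Basic.

Unset Implicit Arguments.

Theorem mainTheorem7 (p : nat) (gT : finGroupType) (G N : {group gT}) (n : nat) :
  prime p -> (p.-group G)%g -> (N <| G)%g ->
  (forall x : galg 'F_p gT,
      prodI (aug N) (kgrp G) x ->
      prodI (powI (aug N) (p ^ n)) (kgrp G) (gpow x (p ^ n))) /\
  (forall x y : galg 'F_p gT,
      prodI (aug N) (kgrp G) x -> prodI (aug N) (kgrp G) y ->
      prodI (aug N) (aug G) (x - y) ->
      J N G (p ^ n) (gpow x (p ^ n) - gpow y (p ^ n))).
Proof.
move=> pp _ nNG.
have m0 : (0 < p ^ n)%N by rewrite expn_gt0 prime_gt0.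
rewrite -(prednK m0); split.
  by move=> x Hx; apply: pow_P.
by move=> x y Hx Hy Hxy; rewrite /J /=; apply: main2.
Qed.
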